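(* Let $\mathcal{P}$ be a bidirected 1-dimensional PVASS, $k\in\mathbb{N}$, and $p,q$ states with $\gamma_k(p,q)=(a,b)$. If there exists a path $P\in\mathrm{Paths}(p,q)_k$ with $w(P)>b$, then $\delta_k(p)\ge m(P)$.
   Context: A 1-dimensional PVASS $\mathcal{P}=(Q,\Gamma,T)$ has transitions $(p,v,\alpha,q)$ with $v\in\mathbb{Z}$, $\alpha\in\{a,\bar a\mid a\in\Gamma\}\cup\{\varepsilon\}$; it is bidirected if $(p,v,\alpha,q)\in T$ implies $(q,-v,\bar\alpha,p)\in T$ ($\bar{\bar a}=a$, $\bar\varepsilon=\varepsilon$). The one-step $\mathbb{Z}$-relation $\hookrightarrow$ on $Q\times\mathbb{Z}\times\Gamma^*$ is defined like the usual step relation (push $\alpha\in\Gamma$, pop $\bar a$ when the top is $a$, add $v$ to the counter) but without requiring the counter to stay nonnegative. A path from $p$ to $q$ is a start state $p$ together with a sequence of transitions inducing a $\hookrightarrow$-run $(p_1,x_1,w_1)\hookrightarrow\dots\hookrightarrow(p_j,x_j,w_j)$ with $p_1=p$, $p_j=q$, $x_1=0$, $w_1=w_j=\varepsilon$. For such $P$: $\mathit{MaxSH}(P)=\max_i|w_i|$, $w(P)=x_j$, $m(P)=\min_i x_i$ ($\le0$). $\mathrm{Paths}(p,q)_k$ is the set of paths from $p$ to $q$ with $\mathit{MaxSH}\le k$. Define $\gamma_k(p,q)=(a,b)$ with $a=\max\{m(P)\mid P\in\mathrm{Paths}(p,q)_k\}$ and $b=\sup\{w(P)\mid P\in\mathrm{Paths}(p,q)_k,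 m(P)=a\}$, where $\max\emptyset=\sup\emptyset=-\infty$ and $b$ may be $\omega$ (i.e.\ $+\infty$). Define $\delta_k(p)=\max\{m(P)\mid P\in\mathrm{Paths}(p,p)_k,\ w(P)>0\}$ (with $\max\emptyset=-\infty$). *)

(* Defs.v *)
From Stdlib Require Import ZArith List FinFun.
Import ListNotations.
Open Scope Z_scope.

Set Implicit Arguments.

Inductive sop (G : Type) : Type :=
| Push (a : G)
| Pop (a : G)
| Eps.
Arguments Eps {G}.

Definition sop_bar (G : Type) (o : sop G) : sop G :=
  match o with Push a => Pop a | Pop a => Push a | Eps => Eps end.

Definition trans (Q G : Type) : Type := (Q * Z * sop G * Q)%type.

(** A 1-dimensional PVASS (Q, Gamma, T): Q, Gamma finite types, T a finite
    set (list) of transitions. *)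
Definition bidirected (Q G : Type) (T : list (trans Q G)) : Prop :=
  forall p v al q, In (p, v, al, q) T -> In (q, -v, sop_bar al, p) T.

(** Configurations (state, counter in Z, stack); head of list = top. *)
Definition conf (Q G : Type) : Type := (Q * Z * list G)%type.

Definition cstate Q G (c : conf Q G) : Q := fst (fst c).
Definition ccnt Q G (c : conf Q G) : Z := snd (fst c).
Definition cstack Q G (c : conf Q G) : list G := snd c.

(** One step of the Z-relation (no nonnegativity requirement). *)
Definition zstep Q G (c : conf Q G) (t : trans Q G) (c' : conf Q G) : Prop :=
  match t with
  | (p, v, al, q) =>
      cstate c = p /\ cstate c' = q /\ ccnt c' = ccnt c + v /\
      match al with
      | Push a => cstack c' = a :: cstack c
      | Pop a => cstack c = a :: cstack c'
      | Eps => cstack c' = cstack c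
      end
  end.

Inductive zrun Q G : conf Q G -> list (trans Q G) -> list (conf Q G) -> Prop :=
| zrun_nil c : zrun c [] [c]
| zrun_cons c t ts c' cs :
    zstep c t c' -> zrun c' ts cs -> zrun c (t :: ts) (c :: cs).

Definition is_path Q G (T : list (trans Q G)) (p q : Q)
    (ts : list (trans Q G)) (cs : list (conf Q G)) : Prop :=
  Forall (fun t => In t T) ts /\
  zrun (p, 0, []) ts cs /\
  exists x, last cs (p, 0, []) = (q, x, []).

Definition maxSH Q G (cs : list (conf Q G)) : nat :=
  list_max (map (fun c => length (cstack c)) cs).

Definition wP Q G (cs : list (conf Q G)) : Z :=
  match cs with
  | [] => 0
  | c :: _ => ccnt (last cs c)
  end.

Definition mP Q G (cs : list (conf Q G)) : Z :=
  match map (@ccnt Q G) cs with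
  | [] => 0
  | x :: xs => fold_left Z.min xs x
  end.

Definition inPaths Q G (T : list (trans Q G)) (k : nat) (p q : Q)
    (ts : list (trans Q G)) (cs : list (conf Q G)) : Prop :=
  is_path T p q ts cs /\ (maxSH cs <= k)%nat.

Inductive ext : Type := NegInf | Fin (z : Z) | PosInf.

Definition ext_le (e f : ext) : Prop :=
  match e, f with
  | NegInf, _ => True
  | _, PosInf => True
  | Fin x, Fin y => x <= y
  | _, _ => False
  end.

Definition ext_lt (e f : ext) : Prop := ext_le e f /\ e <> f.

Definition is_max_ext (S : Z -> Prop) (e : ext) : Prop :=
  (e = NegInf /\ forall z, ~ S z) \/
  (exists z, e = Fin z /\ S z /\ forall y, S y -> y <= z).

Definition is_sup_ext (S : Z -> Prop) (e : ext) : Prop :=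
  match e with
  | NegInf => forall z, ~ S z
  | Fin z => (forall y, S y -> y <= z) /\
             (forall u, (forall y, S y -> y <= u) -> z <= u)
  | PosInf => forall n, exists y, S y /\ n < y
  end.

Definition is_gamma Q G (T : list (trans Q G)) (k : nat) (p q : Q)
    (a b : ext) : Prop :=
  is_max_ext (fun z => exists ts cs, inPaths T k p q ts cs /\ z = mP cs) a /\
  is_sup_ext (fun z => exists ts cs, inPaths T k p q ts cs /\
                          Fin (mP cs) = a /\ z = wP cs) b.

Definition is_delta Q G (T : list (trans Q G)) (k : nat) (p : Q) (d : ext) : Prop :=
  is_max_ext (fun z => exists ts cs, inPaths T k p p ts cs /\
                          0 < wP cs /\ z = mP cs) d.

(* Main.v *)
Require Import Defs.
From Stdlib Require Import ZArith List FinFun.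
From Stdlib Require Import Lia Classical.
Import ListNotations.
Open Scope Z_scope.

Definition shift {Q G : Type} (d : Z) (c : conf Q G) : conf Q G :=
  (cstate c, ccnt c + d, cstack c).

Lemma zrun_head {Q G} {c : conf Q G} {ts cs} : zrun c ts cs -> cs = c :: tl cs.
Proof. intros H; inversion H; subst; reflexivity. Qed.

Lemma last_indep {A} (l : list A) d1 d2 : l <> [] -> last l d1 = last l d2.
Proof.
  induction l as [|x l IH]; intros H; [congruence|].
  destruct l as [|y l]; simpl; auto.
  apply IH; discriminate.
Qed.

Lemma last_app_ne {A} (l l' : list A) d : l' <> [] -> last (l ++ l') d = last l' d.
Proof.
  induction l as [|x l IH]; intros H; simpl; auto.
  rewrite <- IH by auto.
  destruct (l ++ l') eqn:E.
  - apply app_eq_nil in E; tauto.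
  - reflexivity.
Qed.

Lemma zrun_app {Q G} {c : conf Q G} {ts cs} : zrun c ts cs ->
  forall ts2 cs2, zrun (last cs c) ts2 cs2 -> zrun c (ts ++ ts2) (cs ++ tl cs2).
Proof.
  induction 1 as [c|c t ts c' cs Hs Hr IH]; intros ts2 cs2 H2.
  - simpl in *. rewrite (zrun_head H2) in H2. exact H2.
  - simpl. econstructor; [exact Hs|]. apply IH.
    assert (E : last (c :: cs) c = last cs c').
    { rewrite (zrun_head Hr). change (last (c' :: tl cs) c = last (c' :: tl cs) c').
      apply last_indep. discriminate. }
    rewrite <- E. exact H2.
Qed.

Lemma zrun_snoc {Q G} {c : conf Q G} {ts cs t c''} : zrun c ts cs ->
  zstep (last cs c) t c'' -> zrun c (ts ++ [t]) (cs ++ [c'']).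
Proof.
  intros H Hs. change (cs ++ [c'']) with (cs ++ tl [last cs c; c'']).
  apply zrun_app; auto. econstructor; [exact Hs| constructor].
Qed.

Lemma step_rev {Q G} {T : list (trans Q G)} (Hbid : bidirected T) d {c t c'} :
  In t T -> zstep c t c' ->
  exists t', In t' T /\ zstep (shift d c') t' (shift d c).
Proof.
  destruct t as [[[p v] al] q]. intros Hin Hs.
  exists (q, -v, sop_bar al, p). split; [apply Hbid; auto|].
  destruct c as [[s x] w]; destruct c' as [[s' x'] w'].
  unfold zstep, shift, cstate, ccnt, cstack in *; simpl in *.
  destruct al; intuition (try lia); congruence.
Qed.

Lemma zrun_rev {Q G} {T : list (trans Q G)} (Hbid : bidirected T) {c ts cs} :
  Forall (fun t => In t T) ts -> zrun c ts cs -> forall d,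
  exists ts', Forall (fun t => In t T) ts' /\
    zrun (shift d (last cs c)) ts' (map (shift d) (rev cs)).
Proof.
  intros HF H. induction H as [c|c t ts c' cs Hs Hr IH]; intros d.
  - exists []. split; [constructor|]. simpl. constructor.
  - inversion HF; subst. destruct (IH H2 d) as [ts' [HF' Hr']].
    destruct (step_rev Hbid d H1 Hs) as [t' [Hin' Hs']].
    exists (ts' ++ [t']). split.
    + apply Forall_app; split; auto.
    + assert (E : last (c :: cs) c = last cs c').
      { rewrite (zrun_head Hr). change (last (c' :: tl cs) c = last (c' :: tl cs) c').
        apply last_indep. discriminate. }
      rewrite E. simpl. rewrite map_app. simpl. apply zrun_snoc; auto.
      rewrite (zrun_head Hr). simpl. rewrite map_app. simpl. rewrite last_last.
      exact Hs'.
Qed.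

Lemma fold_min_le (xs : list Z) : forall x,
  fold_left Z.min xs x <= x /\ forall y, In y xs -> fold_left Z.min xs x <= y.
Proof.
  induction xs as [|z xs IH]; intros x; simpl.
  - split; [lia| tauto].
  - destruct (IH (Z.min x z)) as [H1 H2]. split; [lia|].
    intros y [<-|Hy]; [lia| auto].
Qed.

Lemma fold_min_in (xs : list Z) : forall x,
  fold_left Z.min xs x = x \/ In (fold_left Z.min xs x) xs.
Proof.
  induction xs as [|z xs IH]; intros x; simpl; auto.
  destruct (IH (Z.min x z)) as [H|H]; [|auto].
  rewrite H. destruct (Z.min_spec x z) as [[_ ->]|[_ ->]]; auto.
Qed.

Lemma mP_le {Q G} {cs : list (conf Q G)} {c} : In c cs -> mP cs <= ccnt c.
Proof.
  destruct cs as [|c0 cs]; [simpl; tauto|]. unfold mP; simpl.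
  destruct (fold_min_le (map (@ccnt Q G) cs) (ccnt c0)) as [H1 H2].
  intros [<-|H]; auto. apply H2. apply in_map; auto.
Qed.

Lemma mP_in {Q G} {cs : list (conf Q G)} : cs <> [] ->
  exists c, In c cs /\ mP cs = ccnt c.
Proof.
  destruct cs as [|c0 cs]; [congruence|]. intros _. unfold mP; simpl.
  destruct (fold_min_in (map (@ccnt Q G) cs) (ccnt c0)) as [H|H].
  - exists c0; simpl; auto.
  - apply in_map_iff in H. destruct H as [c [E Hc]]. exists c; simpl; auto.
Qed.

Lemma maxSH_le {Q G} (cs : list (conf Q G)) k :
  (maxSH cs <= k)%nat <-> forall c, In c cs -> (length (cstack c) <= k)%nat.
Proof.
  unfold maxSH. rewrite list_max_le, Forall_forall. split.
  - intros H c Hc. apply H. apply (in_map (fun c : conf Q G => length (cstack c))); auto.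
  - intros H n Hn. apply in_map_iff in Hn. destruct Hn as [c [<- Hc]]; auto.
Qed.

Lemma wP_eq {Q G} {cs : list (conf Q G)} d : cs <> [] -> wP cs = ccnt (last cs d).
Proof.
  destruct cs as [|c cs]; [congruence|]. intros H. unfold wP. f_equal.
  apply last_indep; auto.
Qed.

Lemma in_tl {A} (x : A) l : In x (tl l) -> In x l.
Proof. destruct l; simpl; auto. Qed.

Lemma Z_max_exists (S : Z -> Prop) z0 : S z0 -> (forall y, S y -> y <= 0) ->
  exists m, S m /\ z0 <= m /\ forall y, S y -> y <= m.
Proof.
  intros H0 Hb.
  assert (Gen : forall N : nat, forall z, S z -> (forall y, S y -> y <= z + Z.of_nat N) ->
    exists m, S m /\ z <= m /\ forall y, S y -> y <= m).
  { induction N as [|N IH]; intros z Hz Hy.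
    - exists z. split; [exact Hz|]. split; [lia|]. intros y Hs. specialize (Hy y Hs). lia.
    - destruct (classic (exists y, S y /\ z < y)) as [[y [Hs Hlt]]|Hn].
      + destruct (IH y Hs) as [m [Hm1 [Hm2 Hm3]]].
        { intros y' Hs'. specialize (Hy y' Hs'). lia. }
        exists m. split; [exact Hm1|]. split; [lia|exact Hm3].
      + exists z. split; [exact Hz|]. split; [lia|]. intros y Hs.
        destruct (Z_le_gt_dec y z); auto. exfalso; apply Hn; exists y; split; auto; lia. }
  apply (Gen (Z.to_nat (- z0)) z0 H0). intros y Hs. specialize (Hb y Hs). lia.
Qed.

Theorem lemma21 (Q G : Type) (HQ : Finite Q) (HG : Finite G)
    (T : list (trans Q G)) (Hbid : bidirected T)
    (k : nat) (p q : Q) (a b : ext) (Hg : is_gamma T k p q a b)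
    (ts : list (trans Q G)) (cs : list (conf Q G))
    (HP : inPaths T k p q ts cs) (Hw : ext_lt b (Fin (wP cs))) :
  exists d, is_delta T k p d /\ ext_le (Fin (mP cs)) d.
Proof.
  destruct Hg as [Ha Hb].
  destruct Ha as [[-> Hn] | [a0 [-> [[ts0 [cs0 [HP0 Ha0]]] Hmax]]]].
  { exfalso. apply (Hn (mP cs)). exists ts, cs; auto. }
  assert (HmPle : mP cs <= a0) by (apply Hmax; exists ts, cs; auto).
  assert (Hlt : wP cs0 < wP cs).
  { destruct b as [|b0|]; simpl in Hb.
    - exfalso. apply (Hb (wP cs0)). exists ts0, cs0. subst; auto.
    - destruct Hb as [Hb1 _].
      assert (wP cs0 <= b0) by (apply Hb1; exists ts0, cs0; subst; auto).
      destruct Hw as [H1 H2]. simpl in H1.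
      assert (b0 <> wP cs) by congruence. lia.
    - destruct Hw as [H1 _]. simpl in H1. contradiction. }
  destruct HP as [[Hts [Hrun [x Hlast]]] Hk].
  destruct HP0 as [[Hts0 [Hrun0 [x0 Hlast0]]] Hk0].
  assert (Hcs : cs <> []) by (rewrite (zrun_head Hrun); discriminate).
  assert (Hcs0 : cs0 <> []) by (rewrite (zrun_head Hrun0); discriminate).
  rewrite (wP_eq (p,0,[]) Hcs), Hlast in Hlt.
  rewrite (wP_eq (p,0,[]) Hcs0), Hlast0 in Hlt. simpl in Hlt.
  set (d := x - x0).
  destruct (zrun_rev Hbid Hts0 Hrun0 d) as [ts1 [Hts1 Hrun1]].
  rewrite Hlast0 in Hrun1.
  assert (E1 : shift d (q, x0, []) = last cs (p, 0, [])).
  { rewrite Hlast. unfold shift, d, cstate, ccnt, cstack; simpl. replace (x0 + (x - x0)) with x by lia. reflexivity. }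
  rewrite E1 in Hrun1.
  pose proof (zrun_app Hrun _ _ Hrun1) as Hrt. unfold ccnt in Hlt; simpl in Hlt.
  set (L := map (shift d) (rev cs0)) in *.
  assert (HL : L <> []).
  { unfold L. rewrite (zrun_head Hrun0). simpl. rewrite map_app. simpl.
    intro E. apply app_eq_nil in E. destruct E; discriminate. }
  assert (HlastL : last L (p,0,[]) = (p, d, [])).
  { unfold L. rewrite (zrun_head Hrun0). simpl. rewrite map_app. simpl.
    rewrite last_last. reflexivity. }
  assert (Hlt_total : last (cs ++ tl L) (p,0,[]) = (p, d, [])).
  { rewrite <- HlastL. destruct L as [|h L']; [congruence|]. simpl.
    destruct L' as [|h2 L''].
    - rewrite app_nil_r. pose proof (zrun_head Hrun1) as Hh. simpl in Hh.
      injection Hh as Hh. rewrite Hh. reflexivity.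
    - rewrite last_app_ne by discriminate. reflexivity. }
  assert (Hin : forall c, In c (cs ++ tl L) -> In c cs \/ exists c0, In c0 cs0 /\ c = shift d c0).
  { intros c Hc. apply in_app_or in Hc. destruct Hc as [Hc|Hc]; [auto|right].
    apply in_tl in Hc. unfold L in Hc. apply in_map_iff in Hc.
    destruct Hc as [c0 [<- Hc0]]. exists c0. split; auto. apply in_rev; auto. }
  assert (Hne : cs ++ tl L <> []).
  { intro E. apply app_eq_nil in E. tauto. }
  assert (HPt : inPaths T k p p (ts ++ ts1) (cs ++ tl L)).
  { split; [split; [apply Forall_app; auto| split; [exact Hrt|]]|].
    - exists d. exact Hlt_total.
    - apply maxSH_le. intros c Hc. destruct (Hin c Hc) as [H|[c0 [Hc0 ->]]].
      + rewrite maxSH_le in Hk. auto.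
      + rewrite maxSH_le in Hk0. unfold shift, cstack; simpl. apply Hk0; auto. }
  assert (Hwt : 0 < wP (cs ++ tl L)).
  { rewrite (wP_eq (p,0,[]) Hne), Hlt_total. unfold ccnt; simpl. unfold d. lia. }
  assert (Hmt : mP cs <= mP (cs ++ tl L)).
  { destruct (mP_in Hne) as [c [Hc ->]]. destruct (Hin c Hc) as [H|[c0 [Hc0 ->]]].
    - apply mP_le; auto.
    - pose proof (mP_le Hc0). unfold shift. unfold ccnt at 1; simpl. fold (ccnt c0). unfold d. lia. }
  set (S := fun z => exists ts cs, inPaths T k p p ts cs /\ 0 < wP cs /\ z = mP cs).
  destruct (Z_max_exists S (mP (cs ++ tl L))) as [m [Hm1 [Hm2 Hm3]]].
  - exists (ts ++ ts1), (cs ++ tl L). auto.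
  - intros y [ts' [cs' [[[_ [Hr' _]] _] [_ ->]]]].
    apply (mP_le (c := (p,0,[]))). rewrite (zrun_head Hr'). left; reflexivity.
  - exists (Fin m). split.
    + right. exists m. auto.
    + simpl. lia.
Qed.
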